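(* For all $k,n\in\mathbb{N}_0$, $$\rho_k(n)+k\,\rho_k(\infty)<(k+1)\,\rho_k(n+1).$$
   Context: For $k\in\mathbb{N}_0$ put $t=k+2$ and define $u_0=0$, $u_1=1$, $u_{i+2}=tu_{i+1}-u_i$; $\rho_k(0)=0$ and $\rho_k(n)=1+\frac{u_{n-1}}{u_n+1}$ for $n\in\mathbb{N}$; $\rho_k(\infty)=\lim_{n\to\infty}\rho_k(n)$ (equal to $2$ for $k=0$). *)

(* Defs.v *)
From Stdlib Require Import Reals.
From Coquelicot Require Import Coquelicot.
Open Scope R_scope.

Fixpoint upair (k : nat) (i : nat) : R * R :=
  match i with
  | O => (0, 1)
  | S j => let (a, b) := upair k j in (b, (INR k + 2) * b - a)
  end.

Definition u (k i : nat) : R := fst (upair k i).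

Definition rho (k n : nat) : R :=
  match n with
  | O => 0
  | S m => 1 + u k m / (u k (S m) + 1)
  end.

Definition rho_inf (k : nat) : R := real (Lim_seq (fun n => rho k n)).

(* Main.v *)
Require Import Defs.
From Stdlib Require Import Reals Lra Lia Psatz.
From Coquelicot Require Import Coquelicot.
Open Scope R_scope.

Lemma upair_S k n : upair k (S n) = (snd (upair k n), (INR k + 2) * snd (upair k n) - fst (upair k n)).
Proof. simpl. destruct (upair k n); reflexivity. Qed.

Lemma u0 k : u k 0 = 0. Proof. reflexivity. Qed.
Lemma u1 k : u k 1 = 1. Proof. reflexivity. Qed.
Lemma uSS k n : u k (S (S n)) = (INR k + 2) * u k (S n) - u k n.
Proof. unfold u. rewrite !upair_S. simpl. reflexivity. Qed.

Lemma u_grow k n : 0 <= u k n /\ u k n + 1 <= u k (S n).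
Proof.
  induction n as [|n IH].
  - rewrite u0, u1; lra.
  - rewrite uSS. assert (0 <= INR k) by apply pos_INR. destruct IH. split; nra.
Qed.

Lemma mu_ex k : exists m, 0 < m <= 1 /\ m * m - (INR k + 2) * m + 1 = 0.
Proof.
  set (t := INR k + 2). assert (Ht : 2 <= t) by (unfold t; pose proof (pos_INR k); lra).
  set (s := sqrt (t*t - 4)).
  assert (Hs : s * s = t*t - 4) by (unfold s; apply sqrt_sqrt; nra).
  assert (Hs0 : 0 <= s) by (unfold s; apply sqrt_pos).
  exists ((t - s)/2). split; [split|].
  - assert (s < t) by nra. lra.
  - assert (t - 2 <= s) by nra. lra.
  - nra.
Qed.

Lemma p_pos k m n : 0 < m <= 1 -> m * m - (INR k + 2) * m + 1 = 0 ->
  0 < m * u k (S n) - u k n /\ m * u k (S n) - u k n <= m.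
Proof.
  intros Hm Hq. induction n as [|n IH].
  - rewrite u0, u1; lra.
  - rewrite uSS.
    replace (m * ((INR k + 2) * u k (S n) - u k n) - u k (S n))
      with (m * (m * u k (S n) - u k n) - (m*m - (INR k + 2)*m + 1) * u k (S n)) by ring.
    rewrite Hq. destruct IH. split; nra.
Qed.

Lemma cassini k n : u k (S n) * u k (S n) - (INR k + 2) * u k (S n) * u k n + u k n * u k n = 1.
Proof.
  induction n as [|n IH].
  - rewrite u0, u1; ring.
  - rewrite uSS. rewrite <- IH. ring.
Qed.

Lemma rho_bound k m j : 0 < m <= 1 -> m * m - (INR k + 2) * m + 1 = 0 ->
  0 <= rho k j <= 1 + m.
Proof.
  intros Hm Hq. destruct j as [|i]; simpl; [lra|].
  destruct (u_grow k i) as [Ha Hb]. destruct (p_pos k m i) as [Hp _]; auto.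
  assert (0 < u k (S i) + 1) by lra.
  split.
  - assert (0 <= u k i / (u k (S i) + 1)) by (apply Rdiv_le_0_compat; lra). lra.
  - assert (u k i / (u k (S i) + 1) <= m); [|lra].
    apply Rmult_le_reg_r with (u k (S i) + 1); auto.
    unfold Rdiv; rewrite Rmult_assoc, Rinv_l by lra. nra.
Qed.

Lemma rho_inf_le k m : 0 < m <= 1 -> m * m - (INR k + 2) * m + 1 = 0 ->
  rho_inf k <= 1 + m.
Proof.
  intros Hm Hq. unfold rho_inf.
  assert (H1 : Rbar_le (Lim_seq (fun n => rho k n)) (Lim_seq (fun _ => 1 + m))).
  { apply Lim_seq_le_loc. exists O. intros j _. apply (rho_bound k m j Hm Hq). }
  assert (H2 : Rbar_le (Lim_seq (fun _ => 0)) (Lim_seq (fun n => rho k n))).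
  { apply Lim_seq_le_loc. exists O. intros j _. apply (rho_bound k m j Hm Hq). }
  rewrite Lim_seq_const in H1; rewrite Lim_seq_const in H2.
  destruct (Lim_seq (fun n => rho k n)); simpl in *; try contradiction; lra.
Qed.

Theorem lemma3 (k n : nat) :
  rho k n + INR k * rho_inf k < (INR k + 1) * rho k (S n).
Proof.
  destruct (mu_ex k) as [m [Hm Hq]].
  pose proof (rho_inf_le k m Hm Hq) as Hi.
  assert (Hk : 0 <= INR k) by apply pos_INR.
  assert (INR k * rho_inf k <= INR k * (1 + m)) by nra.
  assert (Hkm : INR k * m = (1 - m) * (1 - m)) by nra.
  destruct n as [|j].
  - simpl. rewrite u0, u1. nra.
  - cbv [rho]. rewrite uSS.
    set (x := u k j). set (y := u k (S j)). set (t := INR k + 2).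
    destruct (u_grow k j) as [Hx Hxy]. destruct (u_grow k (S j)) as [Hy Hyz].
    rewrite uSS in Hyz. fold x y t in Hxy, Hyz, Hx, Hy.
    destruct (p_pos k m j) as [Hp Hpm]; auto. fold x y in Hp, Hpm.
    pose proof (cassini k j) as Hc. fold x y t in Hc.
    set (p := m * y - x) in *.
    assert (Hx' : x = m * y - p) by (unfold p; ring).
    assert (Hu0 : 0 <= x) by lra.
    assert (HF : p * y * (1 - m*m) = m * (1 - p*p)).
    { assert (E1 : y*y - t*y*x + x*x = y*y*(m*m - t*m + 1) + p*(t - 2*m)*y + p*p)
        by (rewrite Hx'; ring).
      assert (Hq' : m*m - t*m + 1 = 0) by exact Hq.
      assert (E2 : p*(t-2*m)*y = 1 - p*p).
      { rewrite Hq', Rmult_0_r, Rplus_0_l in E1. lra. }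
      replace (p * y * (1 - m*m)) with (m*(p*(t-2*m)*y) + p*y*(m*m - t*m + 1)) by ring.
      rewrite E2, Hq'. ring. }
    assert (Hb2 : (1-p)*(1+m*m) + p*(1+m) - (1+m)*(1-m)*(1-m) > 0).
    { replace ((1-p)*(1+m*m) + p*(1+m) - (1+m)*(1-m)*(1-m))
        with ((m-p)*(1+m*m) + 2*(m*m)*(1-m) + p*(1+m)) by ring.
      assert (0 <= (m-p)*(1+m*m)) by (apply Rmult_le_pos; [lra| pose proof (Rle_0_sqr m); unfold Rsqr in *; lra]).
      assert (0 <= 2*(m*m)*(1-m)) by (apply Rmult_le_pos; [pose proof (Rle_0_sqr m); unfold Rsqr in *; lra|lra]).
      assert (0 < p*(1+m)) by (apply Rmult_lt_0_compat; lra).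
      lra. }
    assert (Hbr : 0 < (1-p)*(m*m + p + p*m*m) + p*(1+m)*(p - (1-m)*(1-m))).
    { replace ((1-p)*(m*m + p + p*m*m) + p*(1+m)*(p - (1-m)*(1-m)))
        with (p*((1-p)*(1+m*m) + p*(1+m) - (1+m)*(1-m)*(1-m)) + (1-p)*(m*m)) by ring.
      assert (0 < p*((1-p)*(1+m*m) + p*(1+m) - (1+m)*(1-m)*(1-m))) by (apply Rmult_lt_0_compat; lra).
      assert (0 <= (1-p)*(m*m)) by (apply Rmult_le_pos; [lra| pose proof (Rle_0_sqr m); unfold Rsqr in *; lra]).
      lra. }
    assert (HG : 0 < (1-m)*(m*m + p + p*m*m)*y + p*m*(p+1) - m*(1-m)*(1-m)*(p+1)).
    { assert (E : p*(1+m)*((1-m)*(m*m + p + p*m*m)*y + p*m*(p+1) - m*(1-m)*(1-m)*(p+1))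
               = m*(1+p)*((1-p)*(m*m + p + p*m*m) + p*(1+m)*(p - (1-m)*(1-m)))).
      { replace ((1-m)*(m*m + p + p*m*m)*y) with ((m*m + p + p*m*m)*(p*y*(1-m*m))/(p*(1+m))).
        2:{ field. lra. }
        rewrite HF. field. lra. }
      apply (Rmult_lt_reg_l (p*(1+m))); [apply Rmult_lt_0_compat; lra|].
      rewrite Rmult_0_r, E.
      apply Rmult_lt_0_compat; [apply Rmult_lt_0_compat; lra|exact Hbr]. }
    assert (Hy1 : 0 < y + 1) by lra.
    assert (Hz1 : 0 < t*y - x + 1) by lra.
    assert (Hmain : x/(y+1) + INR k * m < (INR k + 1) * (y/(t*y - x + 1))).
    { apply Rmult_lt_reg_r with ((y+1)*(t*y-x+1)). apply Rmult_lt_0_compat; lra.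
      replace ((x/(y+1) + INR k * m) * ((y+1)*(t*y-x+1)))
        with (x*(t*y-x+1) + INR k * m *(y+1)*(t*y-x+1)) by (field; lra).
      replace ((INR k + 1) * (y/(t*y - x + 1)) * ((y+1)*(t*y-x+1)))
        with ((INR k + 1)*y*(y+1)) by (field; lra).
      apply Rmult_lt_reg_r with m; [lra|].
      assert (Hq' : t*m - m*m - 1 = 0) by (unfold t; lra).
      assert (ID : (INR k + 1)*y*(y+1)*m - (x*(t*y-x+1) + INR k * m *(y+1)*(t*y-x+1))*m
        = ((1-m)*(m*m + p + p*m*m)*y + p*m*(p+1) - m*(1-m)*(1-m)*(p+1))
          + (m*y*y + y*p - t*m*y*y - m*y*p + m*y - t*m*y - m*p - m)*(t*m - m*m - 1)).
      { rewrite Hx'. unfold t. ring. }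
      rewrite Hq', Rmult_0_r, Rplus_0_r in ID. lra. }
    replace (INR k * (1 + m)) with (INR k + INR k * m) in * by ring.
    fold t. lra.
Qed.
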